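(* Let $V$ be a vertex algebra, $g$ an automorphism of $V$ of finite order $T$, $W$ a $g$-twisted $\phi$-coordinated $V$-module and $U\subseteq W$ a subset. Then the submodule $\langle U\rangle$ generated by $U$ (the smallest submodule of $W$ containing $U$) equals $\mathrm{span}\{v_nw: v\in V,\ n\in(1/T)\mathbb Z,\ w\in U\}$.
   Context: $V$ is a vertex algebra with vacuum $\mathbf 1$, $Y(v,x)=\sum_{k\in\mathbb Z}v_kx^{-k-1}$; $g$ is an automorphism with $g^T=1$. A $g$-twisted $\phi$-coordinated $V$-module is a vector space $W$ with a linear map $Y_W(\cdot,x):V\to\mathrm{Hom}(W,W((x^{1/T})))$, $Y_W(v,x)=\sum_{n\in(1/T)\mathbb Z}v_nx^{-n-1}$, such that: (i) $Y_W(\mathbf 1,x)=\mathrm{id}_W$; (ii) $Y_W(gv,x)=\lim_{x^{1/T}\to\omega_T^{-1}x^{1/T}}Y_W(v,x)$ with $\omega_T=e^{-2\pi\sqrt{-1}/T}$; (iii) for $u,v\in V$ there is $k\in\mathbb N$ with $(x_1-x_2)^kY_W(u,x_1)Y_W(v,x_2)\in\mathrm{Hom}(W,W((x_1^{1/T},x_2^{1/T})))$ and $x_2^k(e^{x_0}-1)^kY_W(Y(u,x_0)v,x_2)=\big((x_1-x_2)^kY_W(u,x_1)Y_W(v,x_2)\big)|_{x_1^{1/T}=(x_2e^{x_0})^{1/T}}$ (where $x_1^{j/T}\mapsto x_2^{j/T}e^{jx_0/T}$). A submodule is a subspace invariant under all $v_n$. *)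

(* Defs.v *)
From HB Require Import structures.
From mathcomp Require Import all_boot all_order all_algebra.
From mathcomp Require Import algC.
Set Implicit Arguments. Unset Strict Implicit. Unset Printing Implicit Defensive.
Import Order.TTheory GRing.Theory Num.Theory.
Local Open Scope ring_scope.

Definition sumsN (W : lmodType algC) (f : nat -> W) (x : W) : Prop :=
  exists N : nat, forall M : nat, (N <= M)%N -> \sum_(i < M) f i = x.

(* [sumsZ f x] : the series sum_{i in Z} f i (finitely many nonzero
   terms) equals x. *)
Definition sumsZ (W : lmodType algC) (f : int -> W) (x : W) : Prop :=
  exists N : nat, forall M : nat, (N <= M)%N ->
    \sum_(i < (M + M).+1) f (i%:Z - M%:Z) = x.

Definition binz (m : int) (i : nat) : algC :=
  (\prod_(j < i) (m%:~R - j%:R)) / (i`!)%:R.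

(* omega_T = e^{-2 pi sqrt(-1)/T}:  T.-root (-1) = e^{pi sqrt(-1)/T}. *)
Definition omegaT (T : nat) : algC := ((T.-root (-1)) ^+ 2)^-1.

Definition ps := nat -> algC.
Definition ps_one : ps := fun n => if n == 0%N then 1 else 0.
Definition ps_mul (f g : ps) : ps := fun n => \sum_(i < n.+1) f i * g (n - i)%N.
Definition ps_pow (f : ps) (k : nat) : ps := iter k (ps_mul f) ps_one.
Definition ps_expm1 : ps := fun n => if n == 0%N then 0 else ((n`!)%:R)^-1.

(* Vertex algebras: Y(v,x) = sum_k v_k x^{-k-1},  v_k w = Y v k w      *)
Definition bilinear_modes (V W : lmodType algC) (Y : V -> int -> W -> W) : Prop :=
  (forall (a : algC) u1 u2 k w, Y (a *: u1 + u2) k w = a *: Y u1 k w + Y u2 k w) /\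
  (forall u k (a : algC) w1 w2, Y u k (a *: w1 + w2) = a *: Y u k w1 + Y u k w2).

Definition truncated_modes (V W : lmodType algC) (Y : V -> int -> W -> W) : Prop :=
  forall v w, exists N : int, forall k : int, N <= k -> Y v k w = 0.

Definition borcherds (V : lmodType algC) (Y : V -> int -> V -> V) : Prop :=
  forall (u v w : V) (m n l : int), exists x : V,
    sumsN (fun i => binz m i *: Y (Y u (l + i%:Z) v) (m + n - i%:Z) w) x /\
    sumsN (fun i => ((-1) ^+ i * binz l i) *:
              (Y u (m + l - i%:Z) (Y v (n + i%:Z) w)
               - ((-1) ^ l) *: Y v (n + l - i%:Z) (Y u (m + i%:Z) w))) x.

Definition is_vertex_algebra (V : lmodType algC) (one : V)
    (Y : V -> int -> V -> V) : Prop :=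
  [/\ bilinear_modes Y /\ truncated_modes Y,
      (forall k v, Y one k v = if k == -1 then v else 0),
      (forall v k, 0 <= k -> Y v k one = 0),
      (forall v, Y v (-1) one = v) &
      borcherds Y].

Definition is_VA_automorphism (V : lmodType algC) (one : V)
    (Y : V -> int -> V -> V) (g : V -> V) : Prop :=
  [/\ (forall (a : algC) u v, g (a *: u + v) = a *: g u + g v),
      bijective g, g one = one &
      (forall u k v, g (Y u k v) = Y (g u) k (g v))].

(* YW v j w = v_{j/T} w, so Y_W(v,x) w = sum_{j in Z} (YW v j w) x^{-j/T-1}. *)

(* coefficient of x^{k/T} in Y_W(v,x) w *)
Definition coefW (V W : lmodType algC) (T : nat) (YW : V -> int -> W -> W)
    (v : V) (k : int) (w : W) : W :=
  YW v (- k - T%:Z) w.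

(* coefficient of x1^{i/T} x2^{j/T} in Y_W(u,x1) Y_W(v,x2) w *)
Definition prodcoef (V W : lmodType algC) (T : nat) (YW : V -> int -> W -> W)
    (u v : V) (w : W) (i j : int) : W :=
  coefW T YW u i (coefW T YW v j w).

(* coefficient of x1^{i/T} x2^{j/T} in (x1 - x2)^k Y_W(u,x1) Y_W(v,x2) w *)
Definition Pcoef (V W : lmodType algC) (T : nat) (YW : V -> int -> W -> W)
    (k : nat) (u v : V) (w : W) (i j : int) : W :=
  \sum_(l < k.+1) (('C(k, l))%:R * (-1) ^+ (k - l)%N) *:
      prodcoef T YW u v w (i - (l * T)%N%:Z) (j - ((k - l) * T)%N%:Z).

(* coefficient of x0^m in e^{i x0 / T}  (zero for m < 0) *)
Definition expcoef (T : nat) (i m : int) : algC :=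
  match m with
  | Posz n => ((i%:~R / T%:R) ^+ n) / (n`!)%:R
  | Negz _ => 0
  end.

Definition is_twisted_phi_module (V : lmodType algC) (one : V)
    (Y : V -> int -> V -> V) (g : V -> V) (T : nat)
    (W : lmodType algC) (YW : V -> int -> W -> W) : Prop :=
  [/\
    bilinear_modes YW, truncated_modes YW,
    (forall k w, coefW T YW one k w = if k == 0 then w else 0),
    (* (ii) Y_W(gv,x) = Y_W(v,x)|_{x^{1/T} -> omega_T^{-1} x^{1/T}} *)
    (forall v k w, coefW T YW (g v) k w = ((omegaT T)^-1 ^ k) *: coefW T YW v k w) &
    (forall u v : V, exists k : nat,
       (* (x1-x2)^k Y_W(u,x1)Y_W(v,x2) in Hom(W, W((x1^{1/T},x2^{1/T}))) *)
       (forall w : W, exists N : int, forall i j : int,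
          (i < N) || (j < N) -> Pcoef T YW k u v w i j = 0) /\
       (* coefficient of x2^{s/T} x0^m of
          x2^k (e^{x0}-1)^k Y_W(Y(u,x0)v,x2) w   and of
          ((x1-x2)^k Y_W(u,x1)Y_W(v,x2) w)|_{x1^{1/T} = (x2 e^{x0})^{1/T}} agree *)
       (forall (w : W) (s m : int), exists x : W,
          sumsN (fun r => ps_pow ps_expm1 k r *:
                   coefW T YW (Y u (r%:Z - m - 1) v) (s - (k * T)%N%:Z) w) x /\
          sumsZ (fun i => expcoef T i m *: Pcoef T YW k u v w i (s - i)) x))
  ].

Definition is_submodule (V W : lmodType algC) (YW : V -> int -> W -> W)
    (S : W -> Prop) : Prop :=
  [/\ S 0, (forall (a : algC) x y, S x -> S y -> S (a *: x + y)) &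
      (forall v j x, S x -> S (YW v j x))].

Definition generated_submodule (V W : lmodType algC) (YW : V -> int -> W -> W)
    (U : W -> Prop) : W -> Prop :=
  fun w => forall S, is_submodule YW S -> (forall u, U u -> S u) -> S w.

Definition span_of (W : lmodType algC) (A : W -> Prop) : W -> Prop :=
  fun w => exists s : seq (algC * W),
    (forall p, p \in s -> A p.2) /\ w = \sum_(p <- s) p.1 *: p.2.

(* Main.v *)
Require Import Defs.
From HB Require Import structures.
From mathcomp Require Import all_boot all_order all_algebra.
From mathcomp Require Import algC zify ring.
Set Implicit Arguments. Unset Strict Implicit. Unset Printing Implicit Defensive.
Import Order.TTheory GRing.Theory Num.Theory.
Local Open Scope ring_scope.

Definition subsp (W : lmodType algC) (S : W -> Prop) :=
  S 0 /\ forall (a : algC) x y, S x -> S y -> S (a *: x + y).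

Section Sub.
Variables (W : lmodType algC) (S : W -> Prop) (HS : subsp S).
Lemma subsp0 : S 0. Proof. by case: HS. Qed.
Lemma subspZ a x : S x -> S (a *: x).
Proof. move=> Hx; rewrite -[_ *: _]addr0; apply: HS.2 Hx subsp0. Qed.
Lemma subspD x y : S x -> S y -> S (x + y).
Proof. move=> Hx Hy; rewrite -[x]scale1r; exact: HS.2. Qed.
Lemma subspB x y : S x -> S y -> S (x - y).
Proof. move=> Hx Hy; rewrite -scaleN1r addrC; exact: HS.2. Qed.
Lemma subsp_sum (I : Type) (r : seq I) (F : I -> W) :
  (forall i, List.In i r -> S (F i)) -> S (\sum_(i <- r) F i).
Proof.
elim: r => [|x r IH] H; first by rewrite big_nil; apply: subsp0.
rewrite big_cons; apply: subspD; first by apply: H; left.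
by apply: IH => i Hi; apply: H; right.
Qed.
Lemma subsp_sum_mem (I : eqType) (r : seq I) (F : I -> W) :
  (forall i, i \in r -> S (F i)) -> S (\sum_(i <- r) F i).
Proof.
elim: r => [|x r IH] H; first by rewrite big_nil; apply: subsp0.
rewrite big_cons; apply: subspD; first by apply: H; rewrite inE eqxx.
by apply: IH => i Hi; apply: H; rewrite inE Hi orbT.
Qed.
Lemma subsp_sum_ord n (F : 'I_n -> W) : (forall i, S (F i)) -> S (\sum_(i < n) F i).
Proof. by move=> H; apply: subsp_sum. Qed.

Lemma vandermonde n (t : nat -> algC) (p : nat -> W) :
  (forall a b, (a < n)%N -> (b < n)%N -> t a = t b -> a = b) ->
  (forall m, S (\sum_(i < n) t i ^+ m *: p i)) -> forall i, (i < n)%N -> S (p i).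
Proof.
elim: n t p => [|n IH] t p Ht H i Hi; first by [].
have Hn : forall m, S (\sum_(i < n) t i ^+ m *: ((t i - t n) *: p i)).
  move=> m.
  have -> : \sum_(i < n) t i ^+ m *: ((t i - t n) *: p i) =
     \sum_(i < n.+1) t i ^+ m.+1 *: p i - t n *: \sum_(i < n.+1) t i ^+ m *: p i.
    rewrite scaler_sumr -sumrB big_ord_recr /=.
    rewrite [X in _ = _ + X](_ : _ = 0) ?addr0; last first.
      by rewrite scalerA exprS subrr.
    apply: eq_bigr => j _.
    by rewrite !scalerA -scalerBl exprS; congr (_ *: _); ring.
  by apply: subspB; [exact: H | apply: subspZ; exact: H].
have IH' := IH t (fun i => (t i - t n) *: p i).
case: (ltnP i n) => Hin.
  have Hs : S ((t i - t n) *: p i).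
    apply: (IH' _ Hn i Hin) => a b Ha Hb; apply: Ht; lia.
  have Hnz : t i - t n != 0.
    rewrite subr_eq0; apply/eqP => E; have := Ht _ _ Hi (ltnSn n) E; lia.
  by rewrite -[p i](scalerK Hnz); apply: subspZ.
have -> : i = n by lia.
have -> : p n = \sum_(i < n.+1) t i ^+ 0 *: p i - \sum_(i < n) p i.
  rewrite big_ord_recr /= expr0 scale1r; under eq_bigr do rewrite expr0 scale1r.
  by rewrite addrAC subrr add0r.
apply: subspB; first exact: H.
apply: subsp_sum_ord => j.
have Hs : S ((t j - t n) *: p j).
  apply: (IH' _ Hn j (ltn_ord j)) => a b Ha Hb; apply: Ht; lia.
have Hnz : t j - t n != 0.
  rewrite subr_eq0; apply/eqP => E; have := Ht _ _ (ltnW (ltn_ord j)) (ltnSn n) E; have := ltn_ord j; lia.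
by rewrite -[p j](scalerK Hnz); apply: subspZ.
Qed.
End Sub.

Lemma span_subsp (W : lmodType algC) (A : W -> Prop) : subsp (span_of A).
Proof.
split; first by exists [::]; rewrite big_nil.
move=> a x y [s1 [H1 ->]] [s2 [H2 ->]].
exists ([seq (a * p.1, p.2) | p <- s1] ++ s2); split.
  move=> p; rewrite mem_cat => /orP [/mapP [q Hq ->]|Hp] /=; [exact: H1 | exact: H2].
rewrite big_cat big_map scaler_sumr /=; congr (_ + _); apply: eq_bigr => p _.
by rewrite scalerA.
Qed.

Lemma span_in (W : lmodType algC) (A : W -> Prop) x : A x -> span_of A x.
Proof.
by move=> Hx; exists [:: (1, x)]; split; [move=> p; rewrite inE => /eqP -> | rewrite big_seq1 scale1r].
Qed.

Lemma span_min (W : lmodType algC) (A S : W -> Prop) : subsp S ->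
  (forall x, A x -> S x) -> forall x, span_of A x -> S x.
Proof.
move=> HS HA x [s [Hs ->]]; apply: subsp_sum_mem => // p Hp.
by apply: subspZ => //; apply: HA; apply: Hs.
Qed.

Section Lin.
Variables (V W : lmodType algC) (YW : V -> int -> W -> W) (H : bilinear_modes YW).
Lemma lin0 v j : YW v j 0 = 0.
Proof.
move: (H.2 v j 1 0 0); rewrite !scale1r addr0 => E.
by apply: (@addrI _ (YW v j 0)); rewrite addr0 -E.
Qed.
Lemma linD v j x y : YW v j (x + y) = YW v j x + YW v j y.
Proof. by have := H.2 v j 1 x y; rewrite !scale1r. Qed.
Lemma linZ v j a x : YW v j (a *: x) = a *: YW v j x.
Proof. by have := H.2 v j a x 0; rewrite !addr0 lin0 addr0. Qed.
Lemma lin_sum v j (I : Type) (r : seq I) (F : I -> W) :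
  YW v j (\sum_(i <- r) F i) = \sum_(i <- r) YW v j (F i).
Proof.
elim: r => [|x r IH]; first by rewrite !big_nil lin0.
by rewrite !big_cons linD IH.
Qed.
End Lin.

Lemma window (W : lmodType algC) (f : int -> W) (B : nat) :
  (forall i : int, (i < - B%:Z) || (B%:Z < i) -> f i = 0) ->
  forall M, (B <= M)%N ->
  \sum_(i < (M + M).+1) f (i%:Z - M%:Z) = \sum_(i < (B + B).+1) f (i%:Z - B%:Z).
Proof.
move=> Hf M HM; rewrite -(subnKC HM); elim: (M - B)%N => [|d IH]; first by rewrite addn0.
rewrite -IH.
have -> : (B + d.+1 + (B + d.+1)).+1 = ((B + d + (B + d)).+1).+2 by lia.
rewrite big_ord_recr big_ord_recl /=.
rewrite [f (Posz (B + d + (B + d)).+2 - _)]Hf; last by apply/orP; right; lia.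
rewrite [f (Posz 0 - _)]Hf; last by apply/orP; left; lia.
rewrite add0r addr0; apply: eq_bigr => i _ /=.
congr f; rewrite /bump /=; lia.
Qed.

Lemma key (V : lmodType algC) (one : V) (Y : V -> int -> V -> V)
  (g : V -> V) (T : nat) (HT : (0 < T)%N)
  (W : lmodType algC) (YW : V -> int -> W -> W)
  (HW : is_twisted_phi_module one Y g T YW) (w : W) (a a' : V) (b b' : int) :
  span_of (fun x => exists (y : V) (c : int), x = YW y c w) (YW a b (YW a' b' w)).
Proof.
case: HW => Hbil Htr Hone Hg Hass.
set Sw := span_of _.
have HS : subsp Sw := span_subsp _.
have [k [H1 H2]] := Hass a a'.
have HP : forall i j, Sw (Pcoef T YW k a a' w i j).
  move=> i j; have [N HN] := H1 w.
  case: (boolP ((i < N) || (j < N))) => Hij.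
    by rewrite HN //; apply: subsp0.
  set s := i + j.
  pose B : nat := (`|N| + `|s - N|)%N.
  pose p := fun n : nat => Pcoef T YW k a a' w (n%:Z - B%:Z) (s - (n%:Z - B%:Z)).
  pose t := fun n : nat => (n%:Z - B%:Z)%:~R / T%:R : algC.
  have HTnz : (T%:R : algC) != 0 by rewrite pnatr_eq0 -lt0n.
  have Hv := @vandermonde _ _ HS ((B + B).+1) t p.
  have Hi : (0 <= i + B%:Z) by move: Hij; rewrite negb_or -!leNgt /B; lia.
  have Hi' : (absz (i + B%:Z)%R < (B + B).+1)%N by move: Hij; rewrite negb_or -!leNgt /B /s; lia.
  have := Hv _ _ _ Hi'.
  have -> : p (absz (i + B%:Z)) = Pcoef T YW k a a' w i j.
    by rewrite /p; congr Pcoef; rewrite /s; lia.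
  apply.
    move=> x y _ _; rewrite /t => /(mulIf (invr_neq0 HTnz)) /intr_inj; lia.
  move=> m.
  have [x [[N1 HN1] [N2 HN2]]] := H2 w s (Posz m).
  have Hx : Sw x.
    rewrite -(HN1 N1 (leqnn _)); apply: subsp_sum_ord => // r; apply: subspZ => //.
    by apply: span_in; eexists; eexists; reflexivity.
  have -> : \sum_(n < (B + B).+1) t n ^+ m *: p n = (m`!)%:R *: x.
    rewrite -(HN2 (maxn N2 B) (leq_maxl _ _)).
    rewrite (@window _ (fun i => expcoef T i (Posz m) *: Pcoef T YW k a a' w i (s - i)) B _ (maxn N2 B) (leq_maxr _ _)).
      rewrite scaler_sumr; apply: eq_bigr => n _.
      rewrite /p scalerA /expcoef /t; congr (_ *: _).
      rewrite [RHS]mulrC divfK // pnatr_eq0 -lt0n; exact: fact_gt0.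
    move=> n Hn; rewrite HN; first by rewrite scaler0.
    by move: Hn; rewrite /B; lia.
  exact: subspZ.
have [Nt HNt] := Htr a' w.
pose J0 := - Nt - T%:Z.
have HB : forall n : nat, forall i j : int, j <= J0 + n%:Z -> Sw (prodcoef T YW a a' w i j).
  elim=> [|n IH] i j Hj.
    rewrite /prodcoef /coefW HNt; first by rewrite lin0 //; apply: subsp0.
    by move: Hj; rewrite /J0; lia.
  have := HP (i + (k * T)%N%:Z) j.
  rewrite /Pcoef big_ord_recr /= subnn mul0n binn expr0 mulr1 scale1r subr0.
  have -> : i + (k * T)%N%:Z - (k * T)%N%:Z = i by lia.
  set r := \sum_(_ < _) _; set q := prodcoef _ _ _ _ _ _ _ => Hrq.
  have -> : q = (r + q) - r by rewrite addrC addKr.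
  apply: subspB => //; apply: subsp_sum_ord => // l; apply: subspZ => //.
  apply: IH.
  have Hl := ltn_ord l.
  have HH' : (T <= (k - l) * T)%N by rewrite leq_pmull // subn_gt0.
  move: HH'; set X := ((k - l) * T)%N; move: Hj; lia.
have -> : YW a b (YW a' b' w) = prodcoef T YW a a' w (- b - T%:Z) (- b' - T%:Z).
  rewrite /prodcoef /coefW; congr YW; [|congr YW]; lia.
apply: (HB (absz ((- b' - T%:Z) - J0)%R)); lia.
Qed.

Theorem proposition2p8 (V : lmodType algC) (one : V) (Y : V -> int -> V -> V)
  (HV : is_vertex_algebra one Y)
  (g : V -> V) (T : nat) (HT : (0 < T)%N)
  (Hg : is_VA_automorphism one Y g) (HgT : forall v, iter T g v = v)
  (W : lmodType algC) (YW : V -> int -> W -> W)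
  (HW : is_twisted_phi_module one Y g T YW)
  (U : W -> Prop) :
  forall w : W, generated_submodule YW U w <->
    span_of (fun x => exists (v : V) (j : int) (u : W), U u /\ x = YW v j u) w.
Proof.
move=> w; split.
  move=> Hw; apply: Hw.
    have HS := span_subsp (fun x => exists (v : V) (j : int) (u : W), U u /\ x = YW v j u).
    split; first exact: subsp0.
      by move=> c x y; apply: HS.2.
    move=> v j x Hx.
    have [Hbil _ _ _ _] := HW.
    have Hspan : subsp (fun z => span_of (fun x => exists (v : V) (j : int) (u : W), U u /\ x = YW v j u) (YW v j z)).
      split; first by rewrite lin0 //; apply: subsp0.
      move=> c x1 x2 H1 H2; rewrite linD // linZ //; exact: HS.2.
    apply: (span_min Hspan _ Hx) => // z [v' [j' [u [Hu ->]]]].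
    have Hk := key HT HW u v v' j j'.
    apply: (span_min HS _ Hk) => y [y' [c ->]].
    by apply: span_in; exists y', c, u.
  move=> u Hu; apply: span_in; exists one, (- 0 - T%:Z), u; split => //.
  have [_ _ Hone _ _] := HW; have := Hone 0 u; rewrite eqxx /coefW => ->; done.
move=> Hw S [HS0 HSl HSY] HU.
have HS : subsp S by split.
apply: (span_min HS _ Hw) => x [v [j [u [Hu ->]]]].
by apply: HSY; apply: HU.
Qed.
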